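(* Let $m>1$ be odd. There exists an OQS of length $m$ if and only if there exists a normalized cocycle $\psi\in Z^2(\mathbb{Z}_2\times\mathbb{Z}_m,\langle-1\rangle)$ that is quasi-orthogonal and is not a coboundary.
   Context: A quaternary sequence $f:\mathbb{Z}_m\to\{\pm1,\pm\mathrm{i}\}$ of odd length $m$ is an OQS if $|R_f(w)|=1$ for all $1\le w\le m-1$, where $R_f(w)=\sum_{k\in\mathbb{Z}_m}f(k)\overline{f(k+w)}$. For a finite group $G$, a cocycle is a map $\psi:G\times G\to\langle-1\rangle=\{\pm1\}$ with $\psi(g,h)\psi(gh,k)=\psi(g,hk)\psi(h,k)$ for all $g,h,k\in G$; it is normalized if $\psi(1,1)=1$. These form a group $Z^2(G,\langle-1\rangle)$ under pointwise multiplication. For $\phi:G\to\{\pm1\}$, the coboundary $\partial\phi(g,h)=\phi(g)^{-1}\phi(h)^{-1}\phi(gh)$; coboundaries form the subgroup $B^2(G,\langle-1\rangle)$. The cocyclic matrix is $M_\psi=[\psi(g,h)]_{g,h\in G}$. Its row excess $RE(M_\psi)$ is the sum of the absolute values of all row sums of $M_\psi$ except the row indexed by the identity. If $|G|=4t+2$, a normalized cocycle $\psi$ is quasi-orthogonal if either $\psi\notin B^2(G,\langle-1\rangle)$ and $RE(M_\psi)=4t$, or $\psi\in B^2(G,\langle-1\rangle)$ and $RE(M_\psi)=8t+2$. *)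

(* Defs.v *)
From HB Require Import structures.
From mathcomp Require Import all_boot all_order all_algebra all_field.
Set Implicit Arguments. Unset Strict Implicit. Unset Printing Implicit Defensive.
Import Order.TTheory GRing.Theory Num.Theory.
Local Open Scope ring_scope.

Definition quaternary (m : nat) (f : 'Z_m -> algC) : Prop :=
  forall k, f k = 1 \/ f k = -1 \/ f k = 'i \/ f k = - 'i.

Definition autocorr (m : nat) (f : 'Z_m -> algC) (w : 'Z_m) : algC :=
  \sum_(k : 'Z_m) f k * (f (k + w))^*.

Definition is_OQS (m : nat) (f : 'Z_m -> algC) : Prop :=
  quaternary f /\ forall w : 'Z_m, w != 0 -> `|autocorr f w| = 1.

Definition G2m (m : nat) : Type := ('Z_2 * 'Z_m)%type.

Section Cocycles.
Variable m : nat.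
Local Notation G := ('Z_2 * 'Z_m)%type.

Definition pm1 (x : int) : Prop := x = 1 \/ x = -1.

Definition is_cocycle (psi : G -> G -> int) : Prop :=
  (forall g h, pm1 (psi g h)) /\
  forall g h k, psi g h * psi (g + h) k = psi g (h + k) * psi h k.

Definition normalized (psi : G -> G -> int) : Prop := psi 0 0 = 1.

Definition coboundary (psi : G -> G -> int) : Prop :=
  exists phi : G -> int, (forall g, pm1 (phi g)) /\
    forall g h, psi g h = (phi g)^-1 * (phi h)^-1 * phi (g + h).

Definition row_excess (psi : G -> G -> int) : int :=
  \sum_(g : G | g != 0) `| \sum_(h : G) psi g h |.

Definition quasi_orthogonal (psi : G -> G -> int) : Prop :=
  normalized psi /\
  exists t : nat, #|{: G}| = (4 * t + 2)%N /\
    ((~ coboundary psi /\ row_excess psi = (4 * t)%:Z) \/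
     (coboundary psi /\ row_excess psi = (8 * t + 2)%:Z)).
End Cocycles.

(* Main.v *)
Require Import Defs.
From HB Require Import structures.
From mathcomp Require Import all_boot all_order all_algebra all_field.
From mathcomp Require Import zify ring lra.
Import Order.TTheory GRing.Theory Num.Theory.
Local Open Scope ring_scope.
Set Implicit Arguments. Unset Strict Implicit. Unset Printing Implicit Defensive.

Lemma pm1M (x y : int) : pm1 x -> pm1 y -> pm1 (x * y).
Proof. by case=> ->; case=> ->; rewrite /pm1 ?mulr1 ?mulN1r ?opprK; auto. Qed.
Lemma pm1_sq (x : int) : pm1 x -> x * x = 1.
Proof. by case=> ->; rewrite ?mulr1 ?mulrNN ?mulr1. Qed.
Lemma pm1_inv (x : int) : pm1 x -> x^-1 = x.
Proof. by case=> ->; rewrite ?invr1 ?invrN1. Qed.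
Lemma pm1_norm (x : int) : pm1 x -> `|x| = 1.
Proof. by case=> ->. Qed.

Lemma Z2_cases (a : 'Z_2) : a = 0 \/ a = 1.
Proof. case: a => [[|[|n]] H] //=; [left|right]; by apply/val_inj. Qed.

Lemma Z2_11 : (1 + 1 : 'Z_2) = 0. Proof. by apply/val_inj. Qed.


Definition beta m (g h : G2m m) : int := if (g.1 != 0) && (h.1 != 0) then -1 else 1.

Lemma beta_pm1 m (g h : G2m m) : pm1 (beta g h).
Proof. rewrite /beta; case: ifP; rewrite /pm1; auto. Qed.

Lemma beta_cocycle m (g h k : G2m m) :
  beta g h * beta (g + h) k = beta g (h + k) * beta h k.
Proof.
case: g h k => [a x] [b y] [c z]; rewrite /beta /=.
by case: (Z2_cases a) => ->; case: (Z2_cases b) => ->; case: (Z2_cases c) => ->.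
Qed.

Definition eZ m : G2m m := (1, 0).
Definition Inv m (psi : G2m m -> G2m m -> int) := psi (eZ m) (eZ m) * psi 0 0.

Lemma eZ2 m : eZ m + eZ m = 0.
Proof. by apply/eqP; rewrite /eZ xpair_eqE /= addr0 eqxx. Qed.

Lemma cob_prod m (psi : G2m m -> G2m m -> int) :
  coboundary psi <-> exists phi : G2m m -> int, (forall g, pm1 (phi g)) /\
    forall g h, psi g h = phi g * phi h * phi (g + h).
Proof.
split; case=> phi [H1 H2]; exists phi; split=> // g h; rewrite H2 ?pm1_inv //.
Qed.

Lemma cob_Inv m (psi : G2m m -> G2m m -> int) : coboundary psi -> Inv psi = 1.
Proof.
case/cob_prod=> phi [H1 H2]; rewrite /Inv !H2 eZ2 addr0.
have h0 := pm1_sq (H1 0); have he := pm1_sq (H1 (eZ m)).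
by rewrite he mul1r h0 mul1r h0.
Qed.

Lemma beta_Inv m : Inv (@beta m) = -1.
Proof. by rewrite /Inv /beta /eZ /=. Qed.

Lemma coc_l0 m (psi : G2m m -> G2m m -> int) : is_cocycle psi -> forall k, psi 0 k = psi 0 0.
Proof.
case=> H1 H2 k; have := H2 0 0 k; rewrite !add0r (pm1_sq (H1 _ _)) => E.
by rewrite -[LHS]mul1r -E -mulrA pm1_sq ?mulr1.
Qed.

Lemma coc_r0 m (psi : G2m m -> G2m m -> int) : is_cocycle psi -> forall g, psi g 0 = psi 0 0.
Proof.
case=> H1 H2 g; have := H2 g 0 0; rewrite !addr0 (pm1_sq (H1 _ _)) => E.
by rewrite -[LHS]mulr1 E mulrA pm1_sq ?mul1r.
Qed.

Definition gam m (k : nat) : G2m m := (k%:R, k%:R).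
Arguments gam : simpl never.

Lemma gamD m a b : gam m (a + b) = gam m a + gam m b.
Proof. by rewrite /gam !natrD. Qed.
Lemma gam0 m : gam m 0 = 0.
Proof. by rewrite /gam. Qed.

Fixpoint Pf m (psi : G2m m -> G2m m -> int) (k : nat) : int :=
  match k with 0%N => 1 | k'.+1 => Pf psi k' * psi (gam m k') (gam m 1) end.

Lemma Pf_pm1 m (psi : G2m m -> G2m m -> int) : is_cocycle psi -> forall k, pm1 (Pf psi k).
Proof. case=> H1 _; elim=> [|k IH] /=; [by left | exact: pm1M]. Qed.

Lemma Padd m (psi : G2m m -> G2m m -> int) : is_cocycle psi -> psi 0 0 = 1 ->
  forall a b, Pf psi (a + b) = Pf psi a * Pf psi b * psi (gam m a) (gam m b).
Proof.
move=> C n a; elim=> [|b IH]; first by rewrite addn0 /= gam0 (coc_r0 C) n !mulr1.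
rewrite addnS /= IH gamD -mulrA (C.2) -[b.+1]addn1 gamD; ring.
Qed.

Lemma gam_mod m a b : (1 < m)%N -> odd m -> gam m a = gam m b -> (a %% (2 * m) = b %% (2 * m))%N.
Proof.
move=> m1 om /eqP; rewrite /gam xpair_eqE => /andP [/eqP E1 /eqP E2].
have := congr1 (@nat_of_ord _) E1; have := congr1 (@nat_of_ord _) E2; rewrite !val_Zp_nat // => F2 F1.
by apply/eqP; rewrite chinese_remainder ?coprime2n // F1 F2 !eqxx.
Qed.

Lemma gam_n m : (1 < m)%N -> gam m (2 * m) = 0.
Proof.
move=> m1; apply/eqP; rewrite /gam xpair_eqE; apply/andP; split; apply/eqP/val_inj;
  rewrite /= val_Zp_nat //; first by rewrite modnMr.
by rewrite modnMl.
Qed.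

Lemma gam_m m : (1 < m)%N -> odd m -> gam m m = eZ m.
Proof.
move=> m1 om; apply/eqP; rewrite /gam /eZ xpair_eqE; apply/andP; split; apply/eqP/val_inj;
  rewrite /= val_Zp_nat //; first by rewrite modn2 om.
by rewrite modnn.
Qed.

Definition idx m (g : G2m m) : nat := (g.2 : nat) + m * (((g.1 : nat) + g.2) %% 2).

Lemma gam_idx m (g : G2m m) : (1 < m)%N -> odd m -> gam m (idx g) = g.
Proof.
move=> m1 om; case: g => a x; apply/eqP; rewrite /gam /idx xpair_eqE /=.
apply/andP; split; apply/eqP/val_inj; rewrite /= val_Zp_nat //.
  have ha : (a < 2)%N by case: a.
  have [t ht] : exists t, m = (2 * t + 1)%N by exists m./2; rewrite -{1}(odd_double_half m) om; lia.
  nia.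
have hx : (x < m)%N by have := ltn_ord x; rewrite [X in (_ < X)%N -> _]Zp_cast.
by rewrite addnC mulnC modnMDl modn_small.
Qed.

Lemma normal_class m (psi : G2m m -> G2m m -> int) : (1 < m)%N -> odd m ->
  is_cocycle psi -> psi 0 0 = 1 -> Inv psi = 1 -> coboundary psi.
Proof.
move=> m1 om C n I; apply/cob_prod.
have Pn : Pf psi (2 * m) = 1.
  rewrite mul2n -addnn Padd // gam_m // pm1_sq ?mul1r; last exact: Pf_pm1.
  by move: I; rewrite /Inv n mulr1.
have Pper : forall k, Pf psi (k + 2 * m) = Pf psi k.
  by move=> k; rewrite Padd // Pn gam_n // (coc_r0 C) n !mulr1.
have Pmod : forall k, Pf psi k = Pf psi (k %% (2 * m))%N.
  move=> k; rewrite {1}(divn_eq k (2 * m)); elim: (k %/ (2 * m))%N => [|q IH].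
    by rewrite mul0n add0n.
  by rewrite mulSnr addnAC Pper.
exists (fun g => Pf psi (idx g)); split; first by move=> g; exact: Pf_pm1.
move=> g h.
have E : Pf psi (idx (g + h)) = Pf psi (idx g + idx h).
  rewrite Pmod [RHS]Pmod; congr Pf; apply: gam_mod => //.
  by rewrite gamD !gam_idx.
rewrite E Padd // !gam_idx //.
have P1 := pm1_sq (Pf_pm1 C (idx g)); have P2 := pm1_sq (Pf_pm1 C (idx h)).
move: P1 P2; set x := Pf psi (idx g); set y := Pf psi (idx h); move=> P1 P2.
transitivity ((x*x)*(y*y)*psi g h); first by rewrite P1 P2 !mul1r.
ring.
Qed.

Lemma class_beta m (psi : G2m m -> G2m m -> int) : (1 < m)%N -> odd m ->
  is_cocycle psi -> psi 0 0 = 1 -> ~ coboundary psi ->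
  exists phi : G2m m -> int, (forall g, pm1 (phi g)) /\
    forall g h, psi g h = beta g h * (phi g * phi h * phi (g + h)).
Proof.
move=> m1 om C n nc.
pose chi g h := psi g h * beta g h.
have Cc : is_cocycle chi.
  split=> [g h|g h k]; first by apply: pm1M; [exact: C.1 | exact: beta_pm1].
  rewrite /chi; transitivity ((psi g h * psi (g + h) k) * (beta g h * beta (g + h) k)); first ring.
  rewrite C.2 beta_cocycle; ring.
have IP : pm1 (Inv psi) by apply: pm1M; exact: C.1.
have Im : Inv psi = -1.
  by case: IP => // I1; case: nc; exact: normal_class.
have [phi [H1 H2]] : exists phi : G2m m -> int, (forall g, pm1 (phi g)) /\
    forall g h, chi g h = phi g * phi h * phi (g + h).
  apply/cob_prod/normal_class => //; first by rewrite /chi n.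
  transitivity (Inv psi * Inv (@beta m)); first by rewrite /Inv /chi; ring.
  by rewrite Im beta_Inv.
exists phi; split=> // g h; rewrite -H2 /chi.
transitivity ((beta g h * beta g h) * psi g h); last ring.
by rewrite pm1_sq ?mul1r //; exact: beta_pm1.
Qed.

Definition phiuv m (u v : 'Z_m -> int) (g : G2m m) : int := if g.1 == 0 then u g.2 else v g.2.
Definition psiuv m (u v : 'Z_m -> int) (g h : G2m m) : int :=
  u 0 * beta g h * (phiuv u v g * phiuv u v h * phiuv u v (g + h)).

Lemma phiuv_pm1 m (u v : 'Z_m -> int) : (forall y, pm1 (u y)) -> (forall y, pm1 (v y)) ->
  forall g, pm1 (phiuv u v g).
Proof. by move=> hu hv g; rewrite /phiuv; case: ifP. Qed.

Lemma psiuv_cocycle m (u v : 'Z_m -> int) : (forall y, pm1 (u y)) -> (forall y, pm1 (v y)) ->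
  is_cocycle (psiuv u v).
Proof.
move=> hu hv; have hp := phiuv_pm1 hu hv; split=> [g h|g h k].
  by rewrite /psiuv; do ! apply: pm1M => //; exact: beta_pm1.
rewrite /psiuv.
have s := pm1_sq (hu 0); have sgh := pm1_sq (hp (g + h)); have shk := pm1_sq (hp (h + k)).
rewrite [LHS](_ : _ = (u 0 * u 0) * (beta g h * beta (g + h) k) *
   (phiuv u v (g + h) * phiuv u v (g + h)) *
   (phiuv u v g * phiuv u v h * phiuv u v k * phiuv u v (g + h + k))); last ring.
rewrite [RHS](_ : _ = (u 0 * u 0) * (beta g (h + k) * beta h k) *
   (phiuv u v (h + k) * phiuv u v (h + k)) *
   (phiuv u v g * phiuv u v h * phiuv u v k * phiuv u v (g + (h + k)))); last ring.
by rewrite beta_cocycle s sgh shk addrA.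
Qed.

Lemma psiuv_norm m (u v : 'Z_m -> int) : (forall y, pm1 (u y)) -> psiuv u v 0 0 = 1.
Proof.
move=> hu; rewrite /psiuv /phiuv /= addr0 /beta /= mulr1.
have s := pm1_sq (hu 0).
by rewrite s mul1r s.
Qed.

Lemma psiuv_ncob m (u v : 'Z_m -> int) : (forall y, pm1 (u y)) -> (forall y, pm1 (v y)) ->
  ~ coboundary (psiuv u v).
Proof.
move=> hu hv /cob_Inv; rewrite /Inv /psiuv eZ2 !addr0.
have be : beta (eZ m) (eZ m) = -1 by [].
have b0 : beta (0 : G2m m) 0 = 1 by [].
rewrite be b0; have hp := phiuv_pm1 hu hv.
by case: (hu 0) => ->; case: (hp 0) => ->; case: (hp (eZ m)) => ->.
Qed.

Definition Asum m (u v : 'Z_m -> int) (x : 'Z_m) : int :=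
  \sum_y (u y * u (y + x) + v y * v (y + x)).
Definition Bsum m (u v : 'Z_m -> int) (x : 'Z_m) : int :=
  \sum_y (u y * v (y + x) - v y * u (y + x)).
Definition rowin m (u v : 'Z_m -> int) (g : G2m m) : int :=
  \sum_h beta g h * (phiuv u v h * phiuv u v (g + h)).

Lemma sumG m (F : G2m m -> int) : \sum_h F h = \sum_y F (0, y) + \sum_y F (1, y).
Proof.
rewrite (eq_bigr (fun p => F (p.1, p.2))); last by case.
rewrite -(pair_bigA _ (fun a y => F (a, y))) /=.
rewrite big_ord_recl big_ord_recl big_ord0 addr0.
by congr (_ + _); apply: eq_bigr => y _; congr F; congr pair; apply/val_inj.
Qed.

Lemma rowin0 m (u v : 'Z_m -> int) x : rowin u v (0, x) = Asum u v x.
Proof.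
rewrite /rowin sumG /Asum big_split /=; congr (_ + _); apply: eq_bigr => y _;
  by rewrite /beta /phiuv /= mul1r addrC.
Qed.

Lemma rowin1 m (u v : 'Z_m -> int) x : rowin u v (1, x) = Bsum u v x.
Proof.
rewrite /rowin sumG /Bsum big_split /=; congr (_ + _); apply: eq_bigr => y _;
  by rewrite /beta /phiuv /= ?mul1r ?mulN1r addrC.
Qed.

Lemma sum_constZ m (c : int) : (1 < m)%N -> \sum_(y : 'Z_m) c = c * m%:Z.
Proof. by move=> m1; rewrite sumr_const card_ord Zp_cast // -mulr_natr natz. Qed.

Lemma rowsum_norm m (u v : 'Z_m -> int) : (forall y, pm1 (u y)) -> (forall y, pm1 (v y)) ->
  forall g, `|\sum_h psiuv u v g h| = `|rowin u v g|.
Proof.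
move=> hu hv g; rewrite /psiuv /rowin.
rewrite (eq_bigr (fun h => (u 0 * phiuv u v g) * (beta g h * (phiuv u v h * phiuv u v (g + h)))));
  last by move=> h _; ring.
have p1 := pm1_norm (hu 0); have p2 := pm1_norm (phiuv_pm1 hu hv g).
by rewrite -mulr_sumr normrM normrM p1 p2 !mul1r.
Qed.

Lemma A0 m (u v : 'Z_m -> int) : (1 < m)%N -> (forall y, pm1 (u y)) -> (forall y, pm1 (v y)) ->
  Asum u v 0 = 2 * m%:Z.
Proof.
move=> m1 hu hv; rewrite /Asum (eq_bigr (fun _ => 2)) ?sum_constZ // => y _.
by rewrite addr0 !pm1_sq.
Qed.

Lemma B0 m (u v : 'Z_m -> int) : Bsum u v 0 = 0.
Proof. by rewrite /Bsum big1 // => y _; rewrite addr0 mulrC subrr. Qed.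

Lemma RE_psiuv m (u v : 'Z_m -> int) : (1 < m)%N -> (forall y, pm1 (u y)) -> (forall y, pm1 (v y)) ->
  row_excess (psiuv u v) = \sum_(x | x != 0) (`|Asum u v x| + `|Bsum u v x|).
Proof.
move=> m1 hu hv; rewrite /row_excess (eq_bigr _ (fun g _ => rowsum_norm hu hv g)).
have T : \sum_(g : G2m m) `|rowin u v g| = `|rowin u v 0| + \sum_(g : G2m m | g != 0) `|rowin u v g|.
  by rewrite (bigD1 (0 : G2m m)).
rewrite sumG in T.
have E : forall x : 'Z_m, `|rowin u v (0, x)| + `|rowin u v (1, x)| = `|Asum u v x| + `|Bsum u v x|.
  by move=> x; rewrite rowin0 rowin1.
move: T; rewrite -big_split /= (eq_bigr _ (fun x _ => E x)) (bigD1 (0 : 'Z_m)) //=.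
have -> : rowin u v 0 = Asum u v 0 by rewrite -rowin0.
by rewrite B0 normr0 addr0 => /addrI.
Qed.

Lemma Cmod m (w : 'Z_m -> int) x : (1 < m)%N -> (forall y, pm1 (w y)) ->
  exists K : int, \sum_y w y * w (y + x) = m%:Z + 4 * K.
Proof.
move=> m1 hw; pose b y : int := (w y == -1)%:Z.
have wb : forall y, w y = 1 - 2 * b y by move=> y; rewrite /b; case: (hw y) => ->.
exists (\sum_y (b y * b (y + x) - b y)).
rewrite (eq_bigr (fun y => 1 + 4 * (b y * b (y + x) - b y) + 2 * (b y - b (y + x))));
  last by move=> y _; rewrite !wb; ring.
have R : \sum_y b (y + x) = \sum_y b y by rewrite [RHS](reindex_inj (addIr x)).
rewrite big_split big_split /= sum_constZ // mul1r -!mulr_sumr [X in 2 * X]sumrB R.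
by rewrite subrr mulr0 addr0.
Qed.

Lemma Amod m (u v : 'Z_m -> int) x : (1 < m)%N -> odd m ->
  (forall y, pm1 (u y)) -> (forall y, pm1 (v y)) -> (2 <= `|Asum u v x|)%R.
Proof.
move=> m1 om hu hv.
have [K1 E1] := Cmod x m1 hu; have [K2 E2] := Cmod x m1 hv.
have [t ht] : exists t, m = (2 * t + 1)%N by exists m./2; rewrite -{1}(odd_double_half m) om; lia.
rewrite /Asum big_split /= E1 E2 ht.
lia.
Qed.

Lemma RE_char m (u v : 'Z_m -> int) (t : nat) : (1 < m)%N -> odd m ->
  (forall y, pm1 (u y)) -> (forall y, pm1 (v y)) -> m = (2 * t + 1)%N ->
  (row_excess (psiuv u v) = (4 * t)%:Z <->
   forall x, x != 0 -> `|Asum u v x| = 2 /\ Bsum u v x = 0).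
Proof.
move=> m1 om hu hv ht.
have S2 : \sum_(x : 'Z_m | x != 0) (2 : int) = (4 * t)%:Z.
  have := sum_constZ 2 m1; rewrite (bigD1 (0 : 'Z_m)) //= ht => E.
  apply: (addrI 2); rewrite E; lia.
rewrite RE_psiuv //; split.
  move=> E.
  have D : \sum_(x : 'Z_m | x != 0) (`|Asum u v x| + `|Bsum u v x| - 2) = 0.
    by rewrite sumrB E S2 subrr.
  have NN : forall x : 'Z_m, x != 0 -> 0 <= `|Asum u v x| + `|Bsum u v x| - 2.
    move=> x _; have := Amod x m1 om hu hv; have := normr_ge0 (Bsum u v x); lia.
  move=> x nx; have := psumr_eq0P NN D nx.
  have := Amod x m1 om hu hv; have := normr_ge0 (Bsum u v x).
  move=> h1 h2 h3; split; first lia.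
  apply/eqP; rewrite -normr_eq0; apply/eqP; lia.
move=> H; rewrite -S2; apply: eq_bigr => x nx.
by have [-> ->] := H x nx; rewrite normr0 addr0.
Qed.

Definition Fq m (u v : 'Z_m -> int) (k : 'Z_m) : algC :=
  ((u k + v k)%:~R + 'i * (u k - v k)%:~R) / 2.

Lemma keyC (j a b c d : algC) : j * j = -1 ->
  2 * ((((a + b) + j * (a - b)) / 2) * (((c + d) - j * (c - d)) / 2)) =
  (a * c + b * d) + j * (a * d - b * c).
Proof.
move=> hj; apply/subr0_eq.
rewrite (_ : _ - _ = (j * j + 1) * (- (a - b) * (c - d) / 2)); first by rewrite hj addNr mul0r.
by field.
Qed.

Lemma conjF m (u v : 'Z_m -> int) k :
  (Fq u v k)^* = ((u k + v k)%:~R - 'i * (u k - v k)%:~R) / 2.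
Proof.
rewrite /Fq rmorphM rmorphD rmorphM /= conjCi !rmorph_int fmorphV rmorph_nat. 
by rewrite mulNr.
Qed.

Lemma autocorr_F m (u v : 'Z_m -> int) w :
  2 * autocorr (Fq u v) w = (Asum u v w)%:~R + 'i * (Bsum u v w)%:~R.
Proof.
rewrite /autocorr /Asum /Bsum mulr_sumr !rmorph_sum mulr_sumr -big_split.
apply: eq_bigr => k _ /=; rewrite conjF /Fq !intrD !intrN !intrM.
exact: keyC (mulCii _).
Qed.

Lemma normF m (u v : 'Z_m -> int) w :
  `|autocorr (Fq u v) w| = 1 <-> Asum u v w * Asum u v w + Bsum u v w * Bsum u v w = 4.
Proof.
have hz := autocorr_F u v w.
move: hz; set z := autocorr _ w; set A := Asum u v w; set B := Bsum u v w => hz.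
have ez : z = (A%:~R + 'i * B%:~R) / 2 by rewrite -hz; field.
have E : z * z^* = (A * A + B * B)%:~R / 4.
  rewrite ez rmorphM rmorphD rmorphM /= conjCi !rmorph_int fmorphV rmorph_nat.
  rewrite intrD !intrM; apply/subr0_eq.
  rewrite (_ : _ - _ = ('i * 'i + 1) * (- (B%:~R * B%:~R) / 4)); first by rewrite mulCii addNr mul0r.
  by field.
have c4 : (4 : algC) = (4 : int)%:~R by [].
split=> H.
  have : `|z| ^+ 2 = 1 by rewrite H expr1n.
  rewrite normCK E => /(congr1 (fun x => x * 4)); rewrite mulfVK ?mul1r; last by rewrite c4 intr_eq0.
  by rewrite c4 => /eqP; rewrite eqr_int => /eqP.
apply/eqP; rewrite -(sqrp_eq1 (normr_ge0 _)); apply/eqP.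
by rewrite normCK E H -c4 divff // c4 intr_eq0.
Qed.

Lemma i1 : (1 : int)%:~R = 1 :> algC. Proof. by []. Qed.

Lemma Fq_quat m (u v : 'Z_m -> int) : (forall y, pm1 (u y)) -> (forall y, pm1 (v y)) ->
  quaternary (Fq u v).
Proof.
move=> hu hv k; rewrite /Fq; case: (hu k) => ->; case: (hv k) => ->; rewrite !intrD !intrN i1.
- by left; field.
- by right; right; left; field.
- by right; right; right; field.
- by right; left; field.
Qed.

Lemma neqN (x : algC) : x != 0 -> (x == - x) = false.
Proof.
move=> nx; apply/negbTE; apply: contra nx => /eqP H.
have : x *+ 2 = 0 by rewrite mulr2n {2}H subrr.
by move/eqP; rewrite mulrn_eq0 /= => ->.
Qed.

Lemma sqne (x y : algC) : x ^+ 2 != y ^+ 2 -> (x == y) = false.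
Proof. by apply: contraNF => /eqP ->. Qed.

Lemma m1n1 : (-1 : algC) != 1.
Proof. by rewrite eq_sym neqN ?oner_eq0. Qed.

Lemma quat_dec m (f : 'Z_m -> algC) : quaternary f ->
  exists u v : 'Z_m -> int, [/\ forall y, pm1 (u y), forall y, pm1 (v y) & forall k, f k = Fq u v k].
Proof.
move=> hf.
exists (fun k => if (f k == 1) || (f k == 'i) then 1 else -1).
exists (fun k => if (f k == 1) || (f k == - 'i) then 1 else -1).
split=> [y|y|k]; try by case: ifP; rewrite /pm1; auto.
have s1 : (1 : algC) ^+ 2 = 1 by rewrite expr1n.
have s2 : (-1 : algC) ^+ 2 = 1 by rewrite sqrrN expr1n.
have s3 : ('i : algC) ^+ 2 = -1 by rewrite sqrCi.
have s4 : (- 'i : algC) ^+ 2 = -1 by rewrite sqrrN sqrCi.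
have n1 := m1n1; have n2 : (1 : algC) != -1 by rewrite eq_sym.
have ni0 : ('i : algC) != 0 by exact: neq0Ci.
have e1 : ((-1 : algC) == 1) = false := negbTE n1.
have e2 : ((-1 : algC) == 'i) = false by apply: sqne; rewrite s2 s3.
have e3 : ((-1 : algC) == -'i) = false by apply: sqne; rewrite s2 s4.
have e4 : ('i == 1 :> algC) = false by apply: sqne; rewrite s3 s1.
have e5 : ('i == -'i :> algC) = false by rewrite neqN.
have e6 : (-'i == 1 :> algC) = false by apply: sqne; rewrite s4 s1.
have e7 : (-'i == 'i :> algC) = false by rewrite eq_sym neqN.
rewrite /Fq; case: (hf k) => [->|[->|[->|->]]]; rewrite ?e1 ?e2 ?e3 ?e4 ?e5 ?e6 ?e7 ?eqxx /=
  !intrD !intrN i1; by field.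
Qed.

Lemma cardG m : (1 < m)%N -> #|{: G2m m}| = (2 * m)%N.
Proof. by move=> m1; rewrite card_prod !card_ord (Zp_cast m1). Qed.

Lemma half_odd m : odd m -> m = (2 * m./2 + 1)%N.
Proof. by move=> om; rewrite -{1}(odd_double_half m) om; lia. Qed.

Theorem corollary4 (m : nat) (hm1 : (1 < m)%N) (hodd : odd m) :
  (exists f : 'Z_m -> algC, is_OQS f) <->
  (exists psi : G2m m -> G2m m -> int,
      is_cocycle psi /\ normalized psi /\ quasi_orthogonal psi /\ ~ coboundary psi).
Proof.
have ht := half_odd hodd; set t := m./2 in ht.
split.
  case=> f [hq hf]; have [u [v [hu hv hk]]] := quat_dec hq.
  have hAB : forall x, x != 0 -> `|Asum u v x| = 2 /\ Bsum u v x = 0.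
    move=> x nx; have := hf x nx.
    have -> : autocorr f x = autocorr (Fq u v) x.
      by rewrite /autocorr; apply: eq_bigr => k _; rewrite !hk.
    move/normF; have := Amod x hm1 hodd hu hv.
    move: (Asum u v x) (Bsum u v x) => A B h1 h2.
    split; nia.
  exists (psiuv u v); split; first exact: psiuv_cocycle.
  have hn : normalized (psiuv u v) by exact: psiuv_norm.
  split=> //; split; last exact: psiuv_ncob.
  split=> //; exists t; split; first by rewrite cardG // {1}ht; lia.
  by left; split; [exact: psiuv_ncob | apply/(RE_char hm1 hodd hu hv ht)].
case=> psi [C [n [[_ [t' [hc hre]]] nc]]].
have [phi [H1 H2]] := class_beta hm1 hodd C n nc.
pose u y := phi (0, y); pose v y := phi (1, y).
have hu : forall y, pm1 (u y) by move=> y; exact: H1.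
have hv : forall y, pm1 (v y) by move=> y; exact: H1.
have p0 : phi 0 = 1.
  move: n; rewrite /normalized H2 addr0 /beta /= mul1r.
  by case: (H1 0) => ->.
have hpu : forall g, phiuv u v g = phi g.
  case=> a y; rewrite /phiuv /u /v /=; by case: (Z2_cases a) => ->.
have Epsi : forall g h, psi g h = psiuv u v g h.
  move=> g h; rewrite H2 /psiuv !hpu.
  by rewrite (_ : u 0 = 1) ?mul1r.
have REe : row_excess psi = row_excess (psiuv u v).
  by rewrite /row_excess; apply: eq_bigr => g _; congr `|_|; apply: eq_bigr => h _.
rewrite cardG // in hc.
have ht' : t' = t by lia.
rewrite ht' in hre.
case: hre => [[_ hre]|[hcb _]]; last by case: nc.
rewrite REe in hre.
have hAB := (RE_char hm1 hodd hu hv ht).1 hre.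
exists (Fq u v); split; first exact: Fq_quat.
move=> w nw; apply/normF; have [h1 h2] := hAB w nw.
move: h1 h2; move: (Asum u v w) (Bsum u v w) => A B h1 ->; nia.
Qed.
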